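(* Let $S$ be a qubit with $H_S=E|1\rangle\langle1|$, $E>0$, and $g=(1+e^{-\beta E})^{-1}$. Let $\rho=\begin{pmatrix}p&c\\c&1-p\end{pmatrix}$, $\sigma=\begin{pmatrix}q&d\\d&1-q\end{pmatrix}$ in the basis $\{|0\rangle,|1\rangle\}$ with $c,d\ge0$, and suppose $p\ne g$ and $\lambda:=\frac{(q-p)g}{g-p}\in[0,1]$. Then: (i) if there is a Thermal Operation $\mathcal{T}$ with $\mathcal{T}(\rho)=\sigma$, then $$d\le\frac{\sqrt{\big(q(1-g)-g(1-p)\big)\big(p(1-g)-g(1-q)\big)}}{|p-g|}\,c;$$ (ii) the channel $\mathcal{E}(\cdot)=\sum_{k\in\{0,1,-1\}}K_k(\cdot)K_k^\dagger$ with $K_0=\sqrt{1-\lambda e^{-\beta E}}\,|0\rangle\langle0|+\sqrt{1-\lambda}\,|1\rangle\langle1|$, $K_1=\sqrt{\lambda e^{-\beta E}}\,|1\rangle\langle0|$, $K_{-1}=\sqrt{\lambda}\,|0\rangle\langle1|$ satisfies $\mathcal{E}(\gamma_S)=\gamma_S$, is time-translation covariant, and maps $\rho$ to a state with populations $(q,1-q)$ and off-diagonal element equal to the right-hand side of the bound in (i).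
   Context: $\beta>0$; $\gamma_S=e^{-\beta H_S}/\mathrm{tr}\,e^{-\beta H_S}$. A Thermal Operation on $S$ is a channel $\mathcal{T}(\rho)=\mathrm{tr}_B[U(\rho\otimes\gamma_B)U^\dagger]$ with $B$ any finite-dimensional system, $H_B$ any Hamiltonian, $\gamma_B=e^{-\beta H_B}/\mathrm{tr}\,e^{-\beta H_B}$, and $U$ unitary with $[U,H_S\otimes\mathbb{I}+\mathbb{I}\otimes H_B]=0$. A channel $\mathcal{E}$ is time-translation covariant if $\mathcal{E}(e^{-iH_St}Xe^{iH_St})=e^{-iH_St}\mathcal{E}(X)e^{iH_St}$ for all $t$ and all $X$. *)

(* Defs.v *)
(* Scalars live in an arbitrary numClosedFieldType C
   (a model of the complex numbers); "real" means [x \is Num.real]. *)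
From HB Require Import structures.
From mathcomp Require Import all_boot all_order all_algebra.
Set Implicit Arguments. Unset Strict Implicit. Unset Printing Implicit Defensive.
Import Order.TTheory GRing.Theory Num.Theory.
Local Open Scope ring_scope.

Section QDefs.
Variable C : numClosedFieldType.

(* the real exponential x |-> e^x on the reals of C: a homomorphism
   (R,+) -> (R, times) with 1 + x <= e^x  (this pins down exp uniquely) *)
Definition is_real_exp (f : C -> C) : Prop :=
  (forall x y, x \is Num.real -> y \is Num.real -> f (x + y) = f x * f y) /\
  (forall x, x \is Num.real -> f x \is Num.real /\ 1 + x <= f x).

(* t |-> e^{i t} on the reals of C: a homomorphism (R,+) -> unit circle
   with |e^{it} - 1 - i t| <= t^2/2 (this pins it down uniquely) *)
Definition is_cis (f : C -> C) : Prop :=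
  (forall s t, s \is Num.real -> t \is Num.real -> f (s + t) = f s * f t) /\
  (forall t, t \is Num.real ->
     `|f t| = 1 /\ `|f t - 1 - 'i * t| <= t ^+ 2 / 2%:R).

Definition adj m n (A : 'M[C]_(m, n)) : 'M[C]_(n, m) := (map_mx Num.conj A)^T.
Definition hermitian n (A : 'M[C]_n) : Prop := adj A = A.
Definition unitary n (U : 'M[C]_n) : Prop := U *m adj U = 1%:M /\ adj U *m U = 1%:M.
Definition psd n (A : 'M[C]_n) : Prop :=
  hermitian A /\ forall v : 'cV[C]_n, 0 <= (adj v *m A *m v) 0 0.
Definition is_state n (A : 'M[C]_n) : Prop := psd A /\ \tr A = 1.

(* composite system S (x) B: index k : 'I_(m*n) <-> pair (i,j) *)
Definition pidx m n (k : 'I_(m * n)) : 'I_m * 'I_n :=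
  enum_val (cast_ord (esym (mxvec_cast m n)) k).
Definition tens m n (A : 'M[C]_m) (B : 'M[C]_n) : 'M[C]_(m * n) :=
  \matrix_(k, l) (A (pidx k).1 (pidx l).1 * B (pidx k).2 (pidx l).2).
Definition ptraceB m n (X : 'M[C]_(m * n)) : 'M[C]_m :=
  \matrix_(i, j) \sum_(b < n) X (mxvec_index i b) (mxvec_index j b).

(* Gibbs state gamma = e^{-beta H}/tr e^{-beta H} of a Hermitian H,
   the matrix function being defined through a spectral decomposition *)
Definition gibbs (expR : C -> C) (beta : C) n (H gam : 'M[C]_n) : Prop :=
  exists V : 'M[C]_n, exists e : 'rV[C]_n,
    unitary V /\ (forall i, e 0 i \is Num.real) /\
    H = V *m diag_mx e *m adj V /\
    gam = (\sum_i expR (- beta * e 0 i))^-1 *: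
            (V *m diag_mx (\row_i expR (- beta * e 0 i)) *m adj V).

Definition thermal_op (expR : C -> C) (beta : C) m (HS : 'M[C]_m)
    (T : 'M[C]_m -> 'M[C]_m) : Prop :=
  exists n : nat, exists HB : 'M[C]_n.+1, exists gB : 'M[C]_n.+1,
  exists U : 'M[C]_(m * n.+1),
    hermitian HB /\ gibbs expR beta HB gB /\ unitary U /\
    U *m (tens HS 1%:M + tens 1%:M HB) = (tens HS 1%:M + tens 1%:M HB) *m U /\
    forall rho, T rho = ptraceB (U *m tens rho gB *m adj U).

(* time-translation covariance w.r.t. the diagonal Hamiltonian H = diag_mx e,
   for which e^{-iHt} = diag(e^{-i e_k t}) *)
Definition evol (cis : C -> C) m (e : 'rV[C]_m) (t : C) : 'M[C]_m :=
  diag_mx (\row_i cis (- (e 0 i * t))).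
Definition covariant (cis : C -> C) m (e : 'rV[C]_m) (T : 'M[C]_m -> 'M[C]_m) : Prop :=
  forall t, t \is Num.real -> forall X : 'M[C]_m,
    T (evol cis e t *m X *m adj (evol cis e t)) =
    evol cis e t *m T X *m adj (evol cis e t).

Definition k0 : 'I_2 := 0.
Definition k1 : 'I_2 := 1.
Definition eS (E : C) : 'rV[C]_2 := \row_(i < 2) (if i == k1 then E else 0).
Definition HS (E : C) : 'M[C]_2 := diag_mx (eS E).
Definition qmat (a b : C) : 'M[C]_2 :=
  a *: delta_mx k0 k0 + b *: delta_mx k0 k1 + b *: delta_mx k1 k0
  + (1 - a) *: delta_mx k1 k1.

Definition gS (expR : C -> C) (beta E : C) : C := (1 + expR (- beta * E))^-1.
Definition lam (expR : C -> C) (beta E p q : C) : C :=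
  (q - p) * gS expR beta E / (gS expR beta E - p).
Definition boundcoef (expR : C -> C) (beta E p q : C) : C :=
  let g := gS expR beta E in
  sqrtC ((q * (1 - g) - g * (1 - p)) * (p * (1 - g) - g * (1 - q))) / `|p - g|.

Definition K0 expR beta E p q : 'M[C]_2 :=
  sqrtC (1 - lam expR beta E p q * expR (- beta * E)) *: delta_mx k0 k0
  + sqrtC (1 - lam expR beta E p q) *: delta_mx k1 k1.
Definition K1 expR beta E p q : 'M[C]_2 :=
  sqrtC (lam expR beta E p q * expR (- beta * E)) *: delta_mx k1 k0.
Definition Km1 expR beta E p q : 'M[C]_2 :=
  sqrtC (lam expR beta E p q) *: delta_mx k0 k1.
Definition kraus_ch expR beta E p q (X : 'M[C]_2) : 'M[C]_2 :=
  K0 expR beta E p q *m X *m adj (K0 expR beta E p q)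
  + K1 expR beta E p q *m X *m adj (K1 expR beta E p q)
  + Km1 expR beta E p q *m X *m adj (Km1 expR beta E p q).

End QDefs.

(* Main.v *)
Require Import Defs.
From HB Require Import structures.
From mathcomp Require Import all_boot all_order all_algebra.
From mathcomp Require Import ring.
Import Order.TTheory GRing.Theory Num.Theory.
Local Open Scope ring_scope.
Set Implicit Arguments. Unset Strict Implicit. Unset Printing Implicit Defensive.

Lemma pidxK m n (i : 'I_m) (j : 'I_n) : pidx (mxvec_index i j) = (i, j).
Proof. by rewrite /pidx /mxvec_index cast_ordK enum_rankK. Qed.

Lemma mxvec_index_inj m n (i i' : 'I_m) (j j' : 'I_n) :
  (mxvec_index i j == mxvec_index i' j') = (i == i') && (j == j').
Proof.
apply/eqP/andP => [E|[/eqP-> /eqP->]] //.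
by have := congr1 (@pidx m n) E; rewrite !pidxK => -[-> ->].
Qed.

Lemma sum_pair (R : nmodType) m n (F : 'I_(m * n) -> R) :
  \sum_k F k = \sum_i \sum_j F (mxvec_index i j).
Proof.
rewrite pair_bigA /=.
rewrite (reindex (fun p : 'I_m * 'I_n => mxvec_index p.1 p.2)) //=.
exists (@pidx m n) => [[i j] _|k _] /=; first by rewrite pidxK.
by case/mxvec_indexP: k => i j; rewrite pidxK.
Qed.

Lemma tensE (C : numClosedFieldType) m n (A : 'M[C]_m) (B : 'M[C]_n) i j i' j' :
  tens A B (mxvec_index i j) (mxvec_index i' j') = A i i' * B j j'.
Proof. by rewrite /tens mxE !pidxK. Qed.

Lemma ptraceBE (C : numClosedFieldType) m n (X : 'M[C]_(m * n)) i j :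
  ptraceB X i j = \sum_b X (mxvec_index i b) (mxvec_index j b).
Proof. by rewrite /ptraceB mxE. Qed.

Lemma mulmx_pairE (C : numClosedFieldType) m n (A B : 'M[C]_(m * n)) k l :
  (A *m B) k l = \sum_i \sum_j A k (mxvec_index i j) * B (mxvec_index i j) l.
Proof. by rewrite mxE sum_pair. Qed.

Lemma matrix_pairP (C : numClosedFieldType) m n (A B : 'M[C]_(m * n)) :
  (forall i j i' j', A (mxvec_index i j) (mxvec_index i' j') = B (mxvec_index i j) (mxvec_index i' j')) -> A = B.
Proof.
move=> H; apply/matrixP => k l.
by case/mxvec_indexP: k => i j; case/mxvec_indexP: l => i' j'; apply: H.
Qed.

Lemma tens_mul (C : numClosedFieldType) m n (A A' : 'M[C]_m) (B B' : 'M[C]_n) :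
  tens A B *m tens A' B' = tens (A *m A') (B *m B').
Proof.
apply: matrix_pairP => i j i' j'.
rewrite mulmx_pairE tensE [(A *m A') _ _]mxE [(B *m B') _ _]mxE big_distrl /=.
apply: eq_bigr => k _; rewrite big_distrr /=; apply: eq_bigr => l _.
by rewrite !tensE mulrACA.
Qed.

Lemma adjq_tens (C : numClosedFieldType) m n (A : 'M[C]_m) (B : 'M[C]_n) :
  adj (tens A B) = tens (adj A) (adj B).
Proof.
apply: matrix_pairP => i j i' j'.
by rewrite /adj !mxE !pidxK /= rmorphM.
Qed.

Lemma tens1 (C : numClosedFieldType) m n :
  tens (1%:M : 'M[C]_m) (1%:M : 'M[C]_n) = 1%:M.
Proof.
apply: matrix_pairP => i j i' j'.
by rewrite tensE !mxE mxvec_index_inj; case: (i == i'); case: (j == j'); rewrite ?mulr1 ?mulr0 ?mul0r.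
Qed.

Lemma tensDl (C : numClosedFieldType) m n (A A' : 'M[C]_m) (B : 'M[C]_n) :
  tens (A + A') B = tens A B + tens A' B.
Proof. by apply: matrix_pairP => i j i' j'; rewrite !mxE !pidxK /= mulrDl. Qed.

Lemma tensDr (C : numClosedFieldType) m n (A : 'M[C]_m) (B B' : 'M[C]_n) :
  tens A (B + B') = tens A B + tens A B'.
Proof. by apply: matrix_pairP => i j i' j'; rewrite !mxE !pidxK /= mulrDr. Qed.

Lemma tensZr (C : numClosedFieldType) m n (A : 'M[C]_m) (B : 'M[C]_n) a :
  tens A (a *: B) = a *: tens A B.
Proof. by apply: matrix_pairP => i j i' j'; rewrite !mxE !pidxK /= mulrCA. Qed.

Lemma adjq_mul (C : numClosedFieldType) m n p (A : 'M[C]_(m, n)) (B : 'M[C]_(n, p)) :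
  adj (A *m B) = adj B *m adj A.
Proof. by rewrite /adj map_mxM trmx_mul. Qed.

Lemma adjq1 (C : numClosedFieldType) n : adj (1%:M : 'M[C]_n) = 1%:M.
Proof. by apply/matrixP => i j; rewrite !mxE rmorph_nat eq_sym. Qed.

Lemma adjqK (C : numClosedFieldType) m n (A : 'M[C]_(m, n)) : adj (adj A) = A.
Proof. by apply/matrixP => i j; rewrite !mxE conjCK. Qed.

Lemma sum_delta (R : pzSemiRingType) n (k0 : 'I_n) (F : 'I_n -> R) :
  \sum_k (k0 == k)%:R * F k = F k0.
Proof.
rewrite (bigD1 k0) //= eqxx mul1r big1 ?addr0 // => k.
by rewrite eq_sym => /negPf ->; rewrite mul0r.
Qed.

Lemma ptrace_conj (C : numClosedFieldType) m n (V : 'M[C]_n) (Y : 'M[C]_(m * n)) :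
  adj V *m V = 1%:M ->
  ptraceB (tens 1%:M V *m Y *m tens 1%:M (adj V)) = ptraceB Y.
Proof.
move=> HV; apply/matrixP => i j; rewrite !ptraceBE.
transitivity (\sum_b \sum_b2 \sum_b1 V b b1 * Y (mxvec_index i b1) (mxvec_index j b2) * (V b b2)^*).
  apply: eq_bigr => b _; rewrite mulmx_pairE.
  rewrite (bigD1 j) //= [X in _ + X]big1 ?addr0; last first.
    move=> i2 Hi2; apply: big1 => b2 _.
    rewrite /adj tensE [1%:M _ _]mxE.
    have -> : (i2 == j) = false by apply/negP => /eqP E; move: Hi2; rewrite E eqxx.
    by rewrite mul0r mulr0.
  apply: eq_bigr => b2 _.
  rewrite mulmx_pairE tensE [1%:M _ _]mxE eqxx mul1r big_distrl /=.
  rewrite (bigD1 i) //= [X in _ + X]big1 ?addr0; last first.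
    move=> i1 Hi1; rewrite big1 ?mul0r // => b1 _.
    rewrite tensE [1%:M _ _]mxE.
    have -> : (i == i1) = false by apply/negP => /eqP E; move: Hi1; rewrite E eqxx.
    by rewrite !mul0r.
  rewrite big_distrl /=; apply: eq_bigr => b1 _.
  by rewrite tensE /adj !mxE eqxx mul1r.
rewrite exchange_big /=.
apply: eq_bigr => b2 _; rewrite exchange_big /=.
transitivity (\sum_b1 Y (mxvec_index i b1) (mxvec_index j b2) * (adj V *m V) b2 b1).
  apply: eq_bigr => b1 _; rewrite mxE big_distrr /=; apply: eq_bigr => b _.
  by rewrite /adj !mxE; ring.
rewrite HV; under eq_bigr do rewrite mxE.
by rewrite (bigD1 b2) //= eqxx mulr1 big1 ?addr0 // => b1 /negPf; rewrite eq_sym => ->; rewrite mulr0.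
Qed.

Lemma tens_diag (C : numClosedFieldType) m n (a : 'rV[C]_m) (b : 'rV[C]_n) :
  tens (diag_mx a) 1%:M + tens 1%:M (diag_mx b) =
  diag_mx (\row_k (a 0 (pidx k).1 + b 0 (pidx k).2)).
Proof.
apply: matrix_pairP => i j i' j'.
rewrite !mxE !pidxK /= mxvec_index_inj.
by case: (i == i'); case: (j == j'); rewrite /= ?mulr1n ?mulr0n ?mulr1 ?mulr0 ?mul0r ?mul1r ?addr0 ?add0r.
Qed.

Lemma TO_struct (C : numClosedFieldType) (expR : C -> C) (beta E : C)
  (T : 'M[C]_2 -> 'M[C]_2) :
  thermal_op expR beta (HS E) T ->
  exists N : nat, exists U' : 'M[C]_(2 * N.+1), exists ep : 'rV[C]_N.+1,
    unitary U' /\ (forall b, ep 0 b \is Num.real) /\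
    (forall a b i b1,
       U' (mxvec_index a b) (mxvec_index i b1) * (eS E 0 i + ep 0 b1) =
       (eS E 0 a + ep 0 b) * U' (mxvec_index a b) (mxvec_index i b1)) /\
    (forall X, T X = ptraceB (U' *m tens X
        ((\sum_i expR (- beta * ep 0 i))^-1 *: diag_mx (\row_i expR (- beta * ep 0 i)))
        *m adj U')).
Proof.
move=> [n [HB [gB [U [_ [[V [ep [[VV1 VV2] [epr [HBe gBe]]]]] [[UU1 UU2] [Ucom Tdef]]]]]]]].
set W : 'M[C]_(2 * n.+1) := tens 1%:M V.
have adjW : adj W = tens 1%:M (adj V) by rewrite /W adjq_tens adjq1.
have WW1 : W *m adj W = 1%:M by rewrite adjW tens_mul mul1mx VV1 tens1.
have WW2 : adj W *m W = 1%:M by rewrite adjW tens_mul mul1mx VV2 tens1.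
set U' := adj W *m U *m W.
set Hp := tens (HS E) 1%:M + tens 1%:M (diag_mx ep).
have HW : tens (HS E) 1%:M + tens 1%:M HB = W *m Hp *m adj W.
  rewrite /Hp mulmxDr mulmxDl adjW !tens_mul !mul1mx !mulmx1 VV1 HBe.
  done.
have UW : U = W *m U' *m adj W.
  by rewrite /U' !mulmxA WW1 mul1mx -mulmxA WW1 mulmx1.
exists n, U', ep; split.
  rewrite /unitary /U' !adjq_mul !adjqK; split.
    by rewrite !mulmxA -(mulmxA _ W) WW1 mulmx1 -(mulmxA _ U) UU1 mulmx1 WW2.
    by rewrite !mulmxA -(mulmxA _ W (adj W)) WW1 mulmx1 -(mulmxA _ (adj U) U) UU2 mulmx1 WW2.
split => //; split.
  have com : U' *m Hp = Hp *m U'.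
    have E1 : Hp = adj W *m (tens (HS E) 1%:M + tens 1%:M HB) *m W.
      by rewrite HW !mulmxA WW2 mul1mx -mulmxA WW2 mulmx1.
    rewrite E1 /U'.
    rewrite !mulmxA -(mulmxA _ W (adj W)) WW1 mulmx1.
    rewrite -(mulmxA _ U) Ucom.
    by rewrite -(mulmxA (adj W *m _) W (adj W)) WW1 mulmx1 !mulmxA.
  have HpE : Hp = diag_mx (\row_k (eS E 0 (pidx k).1 + ep 0 (pidx k).2)) by rewrite /Hp /HS tens_diag.
  move=> a b i b1.
  have := congr1 (fun M : 'M[C]_(2 * n.+1) => M (mxvec_index a b) (mxvec_index i b1)) com.
  by rewrite HpE /= mul_mx_diag mul_diag_mx !mxE !pidxK.
move=> X; clearbody U'; rewrite Tdef UW !adjq_mul !adjqK.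
set G := (_ *: diag_mx _).
have gBG : gB = V *m G *m adj V by rewrite gBe /G scalemxAl scalemxAr.
have XG : tens X gB = W *m tens X G *m adj W.
  by rewrite gBG adjW !tens_mul mul1mx mulmx1.
rewrite XG.
have -> : W *m U' *m adj W *m (W *m tens X G *m adj W) *m (W *m (adj U' *m adj W))
   = W *m (U' *m tens X G *m adj U') *m adj W.
  rewrite !mulmxA -(mulmxA _ (adj W) W) WW2 mulmx1.
  rewrite -(mulmxA _ (adj W) W) WW2 mulmx1.
  by [].
by rewrite /W adjW ptrace_conj.
Qed.

Lemma mul_tens_diag (C : numClosedFieldType) m n (U : 'M[C]_(m * n)) (X : 'M[C]_m)
  (w : 'rV[C]_n) z k j b2 :
  (U *m tens X (z *: diag_mx w)) k (mxvec_index j b2) =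
  \sum_i U k (mxvec_index i b2) * X i j * (z * w 0 b2).
Proof.
rewrite mulmx_pairE; apply: eq_bigr => i _.
rewrite (bigD1 b2) //= [X in _ + X]big1 ?addr0.
  by rewrite tensE !mxE eqxx mulr1n mulrA.
move=> b1 Hb1; rewrite tensE !mxE.
have -> : (b1 == b2) = false by apply/negP => /eqP E; move: Hb1; rewrite E eqxx.
by rewrite mulr0n mulr0 !mulr0.
Qed.

Lemma Tentry (C : numClosedFieldType) m n (U : 'M[C]_(m * n)) (X : 'M[C]_m)
  (w : 'rV[C]_n) z a a' :
  ptraceB (U *m tens X (z *: diag_mx w) *m adj U) a a' =
  \sum_b \sum_b1 (z * w 0 b1) * \sum_i \sum_j
     (U (mxvec_index a b) (mxvec_index i b1) * X i j * (U (mxvec_index a' b) (mxvec_index j b1))^*).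
Proof.
rewrite ptraceBE; apply: eq_bigr => b _.
rewrite mulmx_pairE exchange_big /=; apply: eq_bigr => b1 _.
rewrite [in RHS]exchange_big big_distrr /=; apply: eq_bigr => j _.
rewrite mul_tens_diag /adj !mxE big_distrl big_distrr /=.
by apply: eq_bigr => i _; ring.
Qed.

Lemma prod_sums (R : comPzRingType) (I J : finType) (f : I -> R) (g : J -> R) :
  (\sum_k f k) * (\sum_l g l) = \sum_k \sum_l f k * g l.
Proof. by rewrite big_distrl; apply: eq_bigr => k _; rewrite big_distrr. Qed.

Lemma cM (C : numClosedFieldType) (a b : C) : (a * b)^* = a^* * b^*.
Proof. exact: rmorphM. Qed.
Lemma cB (C : numClosedFieldType) (a b : C) : (a - b)^* = a^* - b^*.
Proof. exact: rmorphB. Qed.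
Lemma cD (C : numClosedFieldType) (a b : C) : (a + b)^* = a^* + b^*.
Proof. exact: rmorphD. Qed.

Lemma cauchy_schwarz (C : numClosedFieldType) (I : finType) (w x y : I -> C) :
  (forall k, 0 <= w k) ->
  `|\sum_k w k * (x k * (y k)^*)| ^+ 2 <=
  (\sum_k w k * (x k * (x k)^*)) * (\sum_k w k * (y k * (y k)^*)).
Proof.
move=> w0.
have wr k : (w k)^* = w k by apply: conj_Creal; apply: ger0_real.
set S := \sum_k _ * (x k * (y k)^*).
set Sx := \sum_k _ * (x k * (x k)^*).
set Sy := \sum_k _ * (y k * (y k)^*).
have key : \sum_k \sum_l w k * w l * ((x k * y l - x l * y k) * (x k * y l - x l * y k)^*)
   = Sx * Sy + Sy * Sx - S * S^* - S^* * S.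
  rewrite /S rmorph_sum /Sx /Sy !prod_sums.
  rewrite -big_split -!sumrB /=; apply: eq_bigr => k _.
  rewrite -big_split -!sumrB /=; apply: eq_bigr => l _.
  rewrite !cB !cM ?conjCK !wr; ring.
have H0 : 0 <= Sx * Sy + Sy * Sx - S * S^* - S^* * S.
  rewrite -key; apply: sumr_ge0 => k _; apply: sumr_ge0 => l _.
  by apply: mulr_ge0; [apply: mulr_ge0|apply: mul_conjC_ge0].
rewrite normCK -subr_ge0.
have -> : Sx * Sy - S * S^* = (Sx * Sy + Sy * Sx - S * S^* - S^* * S) / 2%:R.
  by field.
by apply: divr_ge0 => //; rewrite ler0n.
Qed.


Lemma expR0 (C : numClosedFieldType) (expR : C -> C) : is_real_exp expR -> expR 0 = 1.
Proof.
move=> [Hm Hr].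
have r0 : (0 : C) \is Num.real by rewrite real0.
have := Hm 0 0 r0 r0; rewrite addr0 => H.
have [_ ge] := Hr 0 r0; rewrite addr0 in ge.
have nz : expR 0 != 0 by apply/eqP => E0; move: ge; rewrite E0 ler10.
by apply: (mulfI nz); rewrite -H mulr1.
Qed.

Lemma expRN (C : numClosedFieldType) (expR : C -> C) x :
  is_real_exp expR -> x \is Num.real -> expR x * expR (- x) = 1.
Proof.
move=> He xr; have [Hm _] := He.
by rewrite -Hm ?realN // subrr expR0.
Qed.

Lemma expR_gt0 (C : numClosedFieldType) (expR : C -> C) x :
  is_real_exp expR -> x \is Num.real -> 0 < expR x.
Proof.
move=> He xr; have [Hm Hr] := He.
have x2r : x / 2%:R \is Num.real by rewrite realM ?realV ?realn.
have E : expR x = expR (x / 2%:R) * (expR (x / 2%:R))^*.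
  have [rr _] := Hr _ x2r.
  by rewrite (conj_Creal rr) -Hm // -splitr.
rewrite lt_def E mul_conjC_ge0 andbT -E.
apply/eqP => E0; have := expRN He xr; rewrite E0 mul0r => /eqP; rewrite eq_sym oner_eq0.
by [].
Qed.

Lemma expR_real (C : numClosedFieldType) (expR : C -> C) x :
  is_real_exp expR -> x \is Num.real -> expR x \is Num.real.
Proof. by move=> [_ Hr] xr; have [] := Hr x xr. Qed.

Lemma expR_lt1 (C : numClosedFieldType) (expR : C -> C) x :
  is_real_exp expR -> 0 < x -> expR (- x) < 1.
Proof.
move=> He x0; have xr := gtr0_real x0.
have [_ Hr] := He; have [_ ge] := Hr x xr.
have g1 : 1 < expR x by apply: (lt_le_trans _ ge); rewrite ltrDl.
have E := expRN He xr.
have pos := expR_gt0 He (xr : x \is Num.real).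
have -> : expR (- x) = (expR x)^-1 by apply: (mulfI (lt0r_neq0 pos)); rewrite E divff // lt0r_neq0.
by rewrite invf_lt1.
Qed.

Lemma sum2 (R : nmodType) (F : 'I_2 -> R) : \sum_i F i = F k0 + F k1.
Proof.
rewrite !big_ord_recl big_ord0 addr0 /k0 /k1.
by congr (F _ + F _); apply/val_inj.
Qed.

Lemma qmatE (C : numClosedFieldType) (a b : C) :
  [/\ qmat a b k0 k0 = a, qmat a b k0 k1 = b, qmat a b k1 k0 = b & qmat a b k1 k1 = 1 - a].
Proof. by rewrite /qmat !mxE /=; split; ring. Qed.

Lemma eSE (C : numClosedFieldType) (E : C) : eS E 0 k0 = 0 /\ eS E 0 k1 = E.
Proof. by rewrite /eS !mxE. Qed.

Lemma ord2P (P : 'I_2 -> Prop) : P k0 -> P k1 -> forall i, P i.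
Proof.
move=> H0 H1 i; have : (i == k0) || (i == k1) by case: i => [[|[|]]].
by case/orP => /eqP ->.
Qed.

Lemma bc_eq (C : numClosedFieldType) (x M : C) :
  x \is Num.real -> x != 0 -> 0 <= M -> sqrtC (x ^+ 2 * M) / `|x| = sqrtC M.
Proof.
move=> xr x0 M0.
have x2 : x ^+ 2 = x * x^* by rewrite conj_Creal // expr2.
rewrite x2 sqrtCM ?nnegrE ?mul_conjC_ge0 // -normC_def.
by field; rewrite normr_eq0.
Qed.

Lemma gE_lemma (C : numClosedFieldType) (x : C) : 1 + x != 0 -> 1 - (1 + x)^-1 = x * (1 + x)^-1.
Proof. by move=> h; field. Qed.

Lemma partI (C : numClosedFieldType) (expR : C -> C) (beta E p q c d : C) :
  is_real_exp expR -> 0 < beta -> 0 < E ->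
  p \is Num.real -> q \is Num.real -> 0 <= c -> 0 <= d ->
  p != gS expR beta E ->
  forall T : 'M[C]_2 -> 'M[C]_2,
      thermal_op expR beta (HS E) T -> T (qmat p c) = qmat q d ->
      d <= boundcoef expR beta E p q * c.
Proof.
move=> He b0 E0 pr qr c0 d0 pg T HT Tr.
have [N [U [ep [[UU1 UU2] [epr [Hen Tdef]]]]]] := TO_struct HT.
have br : beta \is Num.real := gtr0_real b0.
have Er : E \is Num.real := gtr0_real E0.
set r := fun b => expR (- beta * ep 0 b).
have rpos b : 0 < r b by apply: expR_gt0 => //; rewrite realM ?realN.
set Z := \sum_b r b.
have Zpos : 0 < Z.
  rewrite lt_def sumr_ge0 ?andbT; last by move=> b _; apply: ltW.
  rewrite psumr_neq0; last by move=> b _; apply: ltW.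
  by apply/hasP; exists ord0; rewrite ?mem_index_enum //= rpos.
set w := fun b => Z^-1 * r b.
have w0 b : 0 <= w b by rewrite mulr_ge0 ?invr_ge0 ?ltW.
have w1 : \sum_b w b = 1 by rewrite -big_distrr /= mulVf // lt0r_neq0.
set u := fun a b i b1 => U (mxvec_index a b) (mxvec_index i b1).
have TE X a a' : T X a a' = \sum_b \sum_b1 w b1 *
     \sum_i \sum_j X i j * (u a b i b1 * (u a' b j b1)^*).
  rewrite Tdef Tentry; apply: eq_bigr => b _; apply: eq_bigr => b1 _.
  rewrite mxE; congr (_ * _); apply: eq_bigr => i _; apply: eq_bigr => j _.
  by rewrite /u; ring.
have en a b i b1 : u a b i b1 != 0 -> eS E 0 i + ep 0 b1 = eS E 0 a + ep 0 b.
  by move=> nz; apply: (mulfI nz); rewrite /u Hen mulrC.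
have cross a b i b1 a' j : eS E 0 a' - eS E 0 a != eS E 0 j - eS E 0 i ->
    u a b i b1 * (u a' b j b1)^* = 0.
  move=> H; have [->|nz1] := eqVneq (u a b i b1) 0; first by rewrite mul0r.
  have [->|nz2] := eqVneq (u a' b j b1) 0; first by rewrite conjC0 mulr0.
  exfalso; move/eqP: H; apply; have e1 := en _ _ _ _ nz1; have e2 := en _ _ _ _ nz2.
  apply/eqP; rewrite -subr_eq0.
  have -> : eS E 0 a' - eS E 0 a - (eS E 0 j - eS E 0 i) =
     (eS E 0 i + ep 0 b1 - (eS E 0 a + ep 0 b)) - (eS E 0 j + ep 0 b1 - (eS E 0 a' + ep 0 b)) by ring.
  by rewrite e1 e2 !subrr.
have [eS0 eS1] := eSE E.
have E0' : E != 0 := lt0r_neq0 E0.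
have n1 : eS E 0 k0 - eS E 0 k0 != eS E 0 k1 - eS E 0 k0 by rewrite eS0 eS1 !subr0 eq_sym.
have n2 : eS E 0 k0 - eS E 0 k0 != eS E 0 k0 - eS E 0 k1 by rewrite eS0 eS1 !subr0 sub0r eq_sym oppr_eq0.
have m1 : eS E 0 k1 - eS E 0 k0 != eS E 0 k0 - eS E 0 k0 by rewrite eS0 eS1 !subr0.
have m2 : eS E 0 k1 - eS E 0 k0 != eS E 0 k0 - eS E 0 k1.
  rewrite eS0 eS1 !subr0 sub0r; apply/eqP => H.
  by move: (addr_gt0 E0 E0); rewrite {2}H subrr ltxx.
have m3 : eS E 0 k1 - eS E 0 k0 != eS E 0 k1 - eS E 0 k1 by rewrite eS0 eS1 !subr0 subrr.
set P := fun a i => \sum_b \sum_b1 w b1 * (u a b i b1 * (u a b i b1)^*).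
have P0 a i : 0 <= P a i.
  by apply: sumr_ge0 => b _; apply: sumr_ge0 => b1 _; rewrite mulr_ge0 ?mul_conjC_ge0.
have rown a b : \sum_i \sum_b1 u a b i b1 * (u a b i b1)^* = 1.
  have := congr1 (fun M : 'M[C]_(2 * N.+1) => M (mxvec_index a b) (mxvec_index a b)) UU1.
  rewrite /= mulmx_pairE [1%:M _ _]mxE eqxx mulr1n => <-.
  by apply: eq_bigr => i _; apply: eq_bigr => b1 _; rewrite /adj !mxE.
have coln i b1 : \sum_a \sum_b (u a b i b1)^* * u a b i b1 = 1.
  have := congr1 (fun M : 'M[C]_(2 * N.+1) => M (mxvec_index i b1) (mxvec_index i b1)) UU2.
  rewrite /= mulmx_pairE [1%:M _ _]mxE eqxx mulr1n => <-.
  by apply: eq_bigr => a _; apply: eq_bigr => b _; rewrite /adj !mxE.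
have Htr : P k0 k1 + P k1 k1 = 1.
  rewrite -(sum2 (fun a => P a k1)) /P.
  under eq_bigr do rewrite exchange_big /=.
  rewrite exchange_big /= -w1; apply: eq_bigr => b1 _.
  rewrite -[RHS]mulr1 -(coln k1 b1) big_distrr /=; apply: eq_bigr => a _.
  rewrite big_distrr /=; apply: eq_bigr => b _; ring.
have [qa qb qc qd] := qmatE p c.
have [qa' qb' qc' qd'] := qmatE q d.
have Hq : q = p * P k0 k0 + (1 - p) * P k0 k1.
  have := congr1 (fun M : 'M[C]_2 => M k0 k0) Tr; rewrite /= TE qa' => <-.
  rewrite /P !big_distrr -big_split /=; apply: eq_bigr => b _.
  rewrite !big_distrr -big_split /=; apply: eq_bigr => b1 _.
  rewrite !sum2 qa qb qc qd (cross _ _ _ _ _ _ n1) (cross _ _ _ _ _ _ n2); ring.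
set S := \sum_b \sum_b1 w b1 * (u k0 b k0 b1 * (u k1 b k1 b1)^*).
have Hd : d = c * S.
  have := congr1 (fun M : 'M[C]_2 => M k0 k1) Tr; rewrite /= TE qb' => <-.
  rewrite /S !big_distrr /=; apply: eq_bigr => b _.
  rewrite !big_distrr /=; apply: eq_bigr => b1 _.
  rewrite !sum2 qa qb qc qd (cross _ _ _ _ _ _ m1) (cross _ _ _ _ _ _ m2) (cross _ _ _ _ _ _ m3); ring.
have CS : `|S| ^+ 2 <= P k0 k0 * P k1 k1.
  rewrite /S /P !pair_bigA /=.
  by apply: (@cauchy_schwarz _ _ (fun x => w x.2) (fun x => u k0 x.1 k0 x.2) (fun x => u k1 x.1 k1 x.2)) => x.
set g := gS expR beta E.
set e := expR (- beta * E).
have er : - beta * E \is Num.real by rewrite realM ?realN.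
have epos : 0 < e by apply: expR_gt0.
have e1ne : 1 + e != 0 by rewrite lt0r_neq0 // addr_gt0.
have gE : 1 - g = e * g by apply: gE_lemma.
have key0 b b1 : w b1 * (u k0 b k0 b1 * (u k0 b k0 b1)^*) = w b * (u k0 b k0 b1 * (u k0 b k0 b1)^*).
  have [->|nz] := eqVneq (u k0 b k0 b1) 0; first by rewrite !mul0r !mulr0.
  by have := en _ _ _ _ nz; rewrite eS0 !add0r /w /r => ->.
have key1 b b1 : (1 - g) * (w b1 * (u k0 b k1 b1 * (u k0 b k1 b1)^*)) =
                 g * (w b * (u k0 b k1 b1 * (u k0 b k1 b1)^*)).
  have [->|nz] := eqVneq (u k0 b k1 b1) 0; first by rewrite !mul0r !mulr0.
  have := en _ _ _ _ nz; rewrite eS0 eS1 add0r => Hb.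
  have rb : r b = e * r b1.
    rewrite /r -Hb mulrDr; have [Hm _] := He; rewrite Hm //.
    by rewrite realM ?realN.
  by rewrite /w rb gE; ring.
have Hg : g * P k0 k0 + (1 - g) * P k0 k1 = g.
  have HP00 : P k0 k0 = \sum_b w b * \sum_b1 (u k0 b k0 b1 * (u k0 b k0 b1)^*).
    rewrite /P; apply: eq_bigr => b _; rewrite big_distrr /=; apply: eq_bigr => b1 _.
    exact: key0.
  have HP01 : (1 - g) * P k0 k1 = \sum_b g * (w b * \sum_b1 (u k0 b k1 b1 * (u k0 b k1 b1)^*)).
    rewrite /P big_distrr /=; apply: eq_bigr => b _.
    rewrite big_distrr [RHS]mulrA [RHS]big_distrr /=; apply: eq_bigr => b1 _.
    by rewrite key1 !mulrA.
  rewrite HP00 HP01 big_distrr -big_split /=.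
  rewrite -[RHS]mulr1 -w1 big_distrr /=; apply: eq_bigr => b _.
  by rewrite -!mulrDr -(sum2 (fun i => \sum_b1 u k0 b i b1 * (u k0 b i b1)^*)) rown mulr1.
have HP11 : P k1 k1 = 1 - P k0 k1 by rewrite -Htr [P k0 k1 + _]addrC addrK.
have gr : g \is Num.real by rewrite /g /gS realV rpredD ?rpred1 // expR_real.
have HA : q * (1 - g) - g * (1 - p) = (p - g) * P k0 k0.
  apply/eqP; rewrite -subr_eq0; apply/eqP.
  transitivity ((1 - p) * (g * P k0 k0 + (1 - g) * P k0 k1 - g)); first by rewrite Hq; ring.
  by rewrite Hg subrr mulr0.
have HB : p * (1 - g) - g * (1 - q) = (p - g) * P k1 k1.
  apply/eqP; rewrite -subr_eq0; apply/eqP.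
  transitivity (p * (g * P k0 k0 + (1 - g) * P k0 k1 - g)); first by rewrite Hq HP11; ring.
  by rewrite Hg subrr mulr0.
rewrite /boundcoef -/g HA HB.
rewrite (_ : (p - g) * P k0 k0 * ((p - g) * P k1 k1) = (p - g) ^+ 2 * (P k0 k0 * P k1 k1)); last by ring.
rewrite bc_eq ?rpredB ?subr_eq0 ?mulr_ge0 //.
rewrite -(ger0_norm d0) Hd normrM (ger0_norm c0) mulrC; apply: ler_wpM2r => //.
rewrite -(sqrCK (normr_ge0 S)) ler_sqrtC ?nnegrE ?exprn_ge0 ?normr_ge0 ?mulr_ge0 //.
Qed.

Lemma mul2E (C : numClosedFieldType) (A B : 'M[C]_2) i j :
  (A *m B) i j = A i k0 * B k0 j + A i k1 * B k1 j.
Proof. by rewrite mxE sum2. Qed.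

Lemma krausE (C : numClosedFieldType) expR beta E p q (X : 'M[C]_2) :
  let s0 := sqrtC (1 - lam expR beta E p q * expR (- beta * E)) in
  let s1 := sqrtC (1 - lam expR beta E p q) in
  let t1 := sqrtC (lam expR beta E p q * expR (- beta * E)) in
  let tm := sqrtC (lam expR beta E p q) in
  [/\ kraus_ch expR beta E p q X k0 k0 = s0 * X k0 k0 * s0^* + tm * X k1 k1 * tm^*,
      kraus_ch expR beta E p q X k0 k1 = s0 * X k0 k1 * s1^*,
      kraus_ch expR beta E p q X k1 k0 = s1 * X k1 k0 * s0^*
    & kraus_ch expR beta E p q X k1 k1 = s1 * X k1 k1 * s1^* + t1 * X k0 k0 * t1^*].
Proof.
move=> s0 s1 t1 tm.
rewrite /kraus_ch /K0 /K1 /Km1 /adj.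
by rewrite /s0 /s1 /t1 /tm; split; rewrite !(mul2E, mxE) /= ?(cD, cM, conjC0, conjC1); ring.
Qed.

Lemma sqrt_conj (C : numClosedFieldType) (x : C) : 0 <= x -> (sqrtC x)^* = sqrtC x.
Proof. by move=> x0; apply: conj_Creal; apply: sqrtC_real. Qed.

Lemma sqrt_sq (C : numClosedFieldType) (x : C) : sqrtC x * sqrtC x = x.
Proof. by rewrite -expr2 sqrtCK. Qed.

Lemma kraus_qmat (C : numClosedFieldType) expR beta E p q (a b : C) :
  let L := lam expR beta E p q in let e := expR (- beta * E) in
  0 <= L -> L <= 1 -> 0 <= e -> e <= 1 ->
  kraus_ch expR beta E p q (qmat a b) =
  qmat ((1 - L * e) * a + L * (1 - a)) (sqrtC (1 - L * e) * sqrtC (1 - L) * b).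
Proof.
move=> L e L0 L1 e0 e1.
have Le0 : 0 <= L * e by rewrite mulr_ge0.
have Le1 : 0 <= 1 - L * e.
  by rewrite subr_ge0 (le_trans _ L1) // ler_piMr.
have L10 : 0 <= 1 - L by rewrite subr_ge0.
have [ka kb kc kd] := krausE expR beta E p q (qmat a b).
have [qa qb qc qd] := qmatE a b.
have [ra rb rc rd] := qmatE ((1 - L * e) * a + L * (1 - a)) (sqrtC (1 - L * e) * sqrtC (1 - L) * b).
apply/matrixP; apply: ord2P; apply: ord2P.
- rewrite ka ra qa qd -/L -/e !sqrt_conj //.
  transitivity (sqrtC (1 - L * e) * sqrtC (1 - L * e) * a + sqrtC L * sqrtC L * (1 - a)); first ring.
  by rewrite !sqrt_sq.
- by rewrite kb rb qb -/L -/e !sqrt_conj //; ring.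
- by rewrite kc rc qc -/L -/e !sqrt_conj //; ring.
- rewrite kd rd qa qd -/L -/e !sqrt_conj //.
  transitivity (sqrtC (1 - L) * sqrtC (1 - L) * (1 - a) + sqrtC (L * e) * sqrtC (L * e) * a); first ring.
  by rewrite !sqrt_sq; ring.
Qed.

Lemma cis_conj (C : numClosedFieldType) (cis : C -> C) x :
  is_cis cis -> x \is Num.real -> cis x != 0 /\ (cis x)^* = (cis x)^-1.
Proof.
move=> [_ Hn] xr; have [n1 _] := Hn x xr.
have H : cis x * (cis x)^* = 1 by rewrite -normCK n1 expr1n.
have nz : cis x != 0 by apply/eqP => E0; move: H; rewrite E0 mul0r => /eqP; rewrite eq_sym oner_eq0.
split => //; apply: (mulfI nz); by rewrite H divff.
Qed.

Lemma cov_lemma (C : numClosedFieldType) (expR cis : C -> C) (beta E p q : C) :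
  is_cis cis -> E \is Num.real -> covariant cis (eS E) (kraus_ch expR beta E p q).
Proof.
move=> Hc Er t tr X.
have eSr i : eS E 0 i \is Num.real by rewrite /eS mxE; case: ifP.
have r0 : - (eS E 0 k0 * t) \is Num.real by rewrite realN realM.
have r1 : - (eS E 0 k1 * t) \is Num.real by rewrite realN realM.
have [n0 c0] := cis_conj Hc r0.
have [n1 c1] := cis_conj Hc r1.
have [eS0 eS1] := eSE E.
rewrite eS0 in n0 c0; rewrite eS1 in n1 c1.
set X' := evol cis (eS E) t *m X *m adj (evol cis (eS E) t).
have [ka kb kc kd] := krausE expR beta E p q X'.
have [la lb lc ld] := krausE expR beta E p q X.
apply/matrixP; apply: ord2P; apply: ord2P.
- rewrite ka /X' /evol /adj !mul2E la lb lc ld !mxE /= ?mulr1n ?mulr0n ?conjC0 ?c0 ?c1; by field; rewrite ?n0 ?n1.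
- rewrite kb /X' /evol /adj !mul2E la lb lc ld !mxE /= ?mulr1n ?mulr0n ?conjC0 ?c0 ?c1; by field; rewrite ?n0 ?n1.
- rewrite kc /X' /evol /adj !mul2E la lb lc ld !mxE /= ?mulr1n ?mulr0n ?conjC0 ?c0 ?c1; by field; rewrite ?n0 ?n1.
- rewrite kd /X' /evol /adj !mul2E la lb lc ld !mxE /= ?mulr1n ?mulr0n ?conjC0 ?c0 ?c1; by field; rewrite ?n0 ?n1.
Qed.

Lemma prod2 (R : comPzSemiRingType) (F : 'I_2 -> R) : \prod_i F i = F k0 * F k1.
Proof.
rewrite !big_ord_recl big_ord0 mulr1 /k0 /k1.
by congr (F _ * F _); apply/val_inj.
Qed.

Lemma gibbs_qubit (C : numClosedFieldType) (expR : C -> C) (beta E : C) (gam : 'M[C]_2) :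
  is_real_exp expR -> 0 < beta -> 0 < E ->
  gibbs expR beta (HS E) gam -> gam = qmat (gS expR beta E) 0.
Proof.
move=> He b0 E0 [V [ev [[VV1 VV2] [evr [HSe gme]]]]].
have [eS0 eS1] := eSE E.
have E0' : E != 0 := lt0r_neq0 E0.
have Htr : ev 0 k0 + ev 0 k1 = E.
  have := congr1 (@mxtrace _ _) HSe.
  rewrite mxtrace_mulC mulmxA VV2 mul1mx !mxtrace_diag !sum2 eS0 eS1 add0r => ->.
  by [].
have Hdet : ev 0 k0 * ev 0 k1 = 0.
  have := congr1 (@determinant _ _) HSe.
  rewrite !det_mulmx mulrAC -det_mulmx VV1 det1 mul1r !det_diag !prod2 eS0 mul0r => ->.
  by [].
have evi i : ev 0 i = 0 \/ ev 0 i = E.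
  have : ev 0 i * (ev 0 i - (ev 0 k0 + ev 0 k1)) = - (ev 0 k0 * ev 0 k1).
    by move: i; apply: ord2P; ring.
  rewrite Hdet oppr0 Htr => /eqP; rewrite mulf_eq0 subr_eq0 => /orP[] /eqP; by [left|right].
set e := expR (- beta * E).
set bb := (e - 1) / E.
have fi i : expR (- beta * ev 0 i) = 1 + bb * ev 0 i.
  case: (evi i) => ->; first by rewrite !mulr0 (expR0 He) addr0.
  by rewrite /bb -/e; field.
have Dd : diag_mx (\row_i expR (- beta * ev 0 i)) = 1%:M + bb *: diag_mx ev.
  apply/matrixP => i j; rewrite !mxE fi.
  by case: (i == j); rewrite ?mulr1n ?mulr0n ?mulr0 ?addr0.
have HZ : \sum_i expR (- beta * ev 0 i) = 1 + e.
  rewrite sum2 !fi.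
  transitivity (1 + 1 + bb * (ev 0 k0 + ev 0 k1)); first by ring.
  by rewrite Htr /bb; field.
rewrite gme HZ Dd mulmxDr mulmxDl mulmx1 VV1 -scalemxAr -scalemxAl -HSe.
have e0 : 0 < e by apply: expR_gt0; rewrite // realM ?realN ?gtr0_real.
have e1 : 1 + e != 0 by rewrite lt0r_neq0 // addr_gt0.
have [qa qb qc qd] := qmatE (gS expR beta E) 0.
apply/matrixP; apply: ord2P; apply: ord2P.
- by rewrite qa !mxE /gS -/e /=; field.
- by rewrite qb !mxE /gS -/e /=; field.
- by rewrite qc !mxE /gS -/e /=; field.
- by rewrite qd !mxE /gS -/e /bb /= mulr1n; field; rewrite e1 E0'.
Qed.
Unset Implicit Arguments.

Theorem mainTheorem16 (C : numClosedFieldType) (expR cis : C -> C)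
  (Hexp : is_real_exp expR) (Hcis : is_cis cis)
  (beta E p q c d : C) :
  0 < beta -> 0 < E ->
  p \is Num.real -> q \is Num.real -> 0 <= c -> 0 <= d ->
  is_state (qmat p c) -> is_state (qmat q d) ->
  p != gS expR beta E ->
  0 <= lam expR beta E p q <= 1 ->
  (forall T : 'M[C]_2 -> 'M[C]_2,
      thermal_op expR beta (HS E) T -> T (qmat p c) = qmat q d ->
      d <= boundcoef expR beta E p q * c)
  /\
  ((forall gam : 'M[C]_2, gibbs expR beta (HS E) gam ->
       kraus_ch expR beta E p q gam = gam)
   /\ covariant cis (eS E) (kraus_ch expR beta E p q)
   /\ kraus_ch expR beta E p q (qmat p c)
        = qmat q (boundcoef expR beta E p q * c)).
Proof.
move=> b0 E0 pr qr c0 d0 _ _ pg /andP[L0 L1].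
split; first exact: partI.
have br := gtr0_real b0.
set e := expR (- beta * E).
have e0 : 0 < e by apply: expR_gt0; rewrite // realM ?realN ?gtr0_real.
have e0' : 0 <= e := ltW e0.
have e1 : e <= 1 by rewrite ltW // /e mulNr; apply: expR_lt1 => //; rewrite mulr_gt0.
set g := gS expR beta E.
have e1ne : 1 + e != 0 by rewrite lt0r_neq0 // addr_gt0.
have g0 : g != 0 by rewrite /g /gS invr_eq0.
have eg : e = g^-1 - 1 by rewrite /g /gS invrK addrC addKr.
have gp : g - p != 0 by rewrite subr_eq0 eq_sym.
set L := lam expR beta E p q.
have LE : L = (q - p) * g / (g - p) by [].
split.
  move=> gam Hg; rewrite (gibbs_qubit Hexp b0 E0 Hg) kraus_qmat // -/g -/L -/e.
  congr qmat; last by rewrite mulr0.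
  by rewrite eg; field.
split; first by apply: cov_lemma => //; apply: gtr0_real.
rewrite kraus_qmat // -/L -/e; congr qmat.
  by rewrite LE eg; field; rewrite gp g0.
have Le1 : 0 <= 1 - L * e by rewrite subr_ge0 (le_trans _ L1) // ler_piMr.
have L10 : 0 <= 1 - L by rewrite subr_ge0.
rewrite /boundcoef -/g.
rewrite (_ : (q * (1 - g) - g * (1 - p)) * (p * (1 - g) - g * (1 - q)) =
             (p - g) ^+ 2 * ((1 - L * e) * (1 - L))); last first.
  by rewrite LE eg; field; rewrite gp g0.
rewrite bc_eq ?rpredB ?subr_eq0 ?mulr_ge0 //.
  by rewrite sqrtCM ?nnegrE.
by apply: gtr0_real; rewrite /g /gS invr_gt0 addr_gt0 // ltr01.
Qed.
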